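(* If $\Phi$ is a depth-bounded fuzzy bisimulation between fuzzy automata $\mathcal{A}$ and $\mathcal{A}'$, then $\|\Phi\|^b_{\mathcal{A},\mathcal{A}'}\le E(\mathbf{L}(\mathcal{A}),\mathbf{L}(\mathcal{A}'))$.
   Context: $\mathcal{L}=\langle L,\le,\otimes,\Rightarrow,0,1\rangle$ is a complete residuated lattice: $\langle L,\le,0,1\rangle$ is a complete lattice with least element $0$ and greatest element $1$, $\langle L,\otimes,1\rangle$ is a commutative monoid, and $x\otimes y\le z$ iff $x\le (y\Rightarrow z)$; $x\Leftrightarrow y=(x\Rightarrow y)\wedge(y\Rightarrow x)$. Fuzzy sets/relations are maps into $L$ ordered pointwise; $\varphi^{-1}(b,a)=\varphi(a,b)$; $(\varphi\circ\psi)(a,c)=\bigvee_b\varphi(a,b)\otimes\psi(b,c)$, $(f\circ\varphi)(b)=\bigvee_a f(a)\otimes\varphi(a,b)$, $(\varphi\circ g)(a)=\bigvee_b\varphi(a,b)\otimes g(b)$; $S(g,f)=\bigwedge_a(g(a)\Rightarrow f(a))$, $E(g,f)=\bigwedge_a(g(a)\Leftrightarrow f(a))$. A fuzzy automaton over $\Sigma$ is $\mathcal{A}=\langle A,\delta^{\mathcal{A}},\sigma^{\mathcal{A}},\tau^{\mathcal{A}}\rangle$ with $A$ nonempty, $\delta^{\mathcal{A}}:A\times\Sigma\times A\to L$, $\sigma^{\mathcal{A}},\tau^{\mathcal{A}}:A\to L$; $\delta^{\mathcal{A}}_s(x,y)=\delta^{\mathcal{A}}(x,s,y)$; similarly $\mathcal{A}'$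 with states $A'$. $\mathbf{L}(\mathcal{A})(s_1\cdots s_k)=\sigma^{\mathcal{A}}\circ\delta^{\mathcal{A}}_{s_1}\circ\cdots\circ\delta^{\mathcal{A}}_{s_k}\circ\tau^{\mathcal{A}}$. $\|\varphi\|_{\mathcal{A},\mathcal{A}'}=S(\sigma^{\mathcal{A}},\sigma^{\mathcal{A}'}\circ\varphi^{-1})$. A depth-bounded fuzzy bisimulation between $\mathcal{A}$ and $\mathcal{A}'$ is a sequence $\Phi=(\varphi_n)_{n\in\mathbb{N}}$ of fuzzy relations $A\times A'\to L$ with $\varphi_n\le\varphi_{n-1}$ ($n\ge1$), $\varphi_0^{-1}\circ\tau^{\mathcal{A}}\le\tau^{\mathcal{A}'}$, $\varphi_0\circ\tau^{\mathcal{A}'}\le\tau^{\mathcal{A}}$, and for all $s\in\Sigma,n\ge1$: $\varphi_n^{-1}\circ\delta^{\mathcal{A}}_s\le\delta^{\mathcal{A}'}_s\circ\varphi_{n-1}^{-1}$ and $\varphi_n\circ\delta^{\mathcal{A}'}_s\le\delta^{\mathcal{A}}_s\circ\varphi_{n-1}$. Its norm is $\|\Phi\|^b_{\mathcal{A},\mathcal{A}'}=\bigwedge_n\|\varphi_n\|_{\mathcal{A},\mathcal{A}'}\wedge\bigwedge_n\|\varphi_n^{-1}\|_{\mathcal{A}',\mathcal{A}}$. *)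

(* Defs.v *)
From Stdlib Require Import List.
Import ListNotations.

Set Implicit Arguments.

Record crl := CRL {
  car :> Type;
  le : car -> car -> Prop;
  mul : car -> car -> car;
  res : car -> car -> car;
  zero : car;
  one : car;
  sup : (car -> Prop) -> car;
  le_refl : forall x, le x x;
  le_trans : forall x y z, le x y -> le y z -> le x z;
  le_antisym : forall x y, le x y -> le y x -> x = y;
  sup_ub : forall (S : car -> Prop) x, S x -> le x (sup S);
  sup_least : forall (S : car -> Prop) y, (forall x, S x -> le x y) -> le (sup S) y;
  zero_least : forall x, le zero x;
  one_greatest : forall x, le x one;
  mulA : forall x y z, mul x (mul y z) = mul (mul x y) z;
  mulC : forall x y, mul x y = mul y x;
  mul1 : forall x, mul x one = x;
  adjunction : forall x y z, le (mul x y) z <-> le x (res y z)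
}.

Arguments le {c}.
Arguments mul {c}.
Arguments res {c}.
Arguments sup {c}.
Arguments zero {c}.
Arguments one {c}.

Section Ops.
Context {L : crl}.

Definition inf (S : L -> Prop) : L := sup (fun x => forall y, S y -> le x y).
Definition meet (x y : L) : L := inf (fun z => z = x \/ z = y).
Definition biimp (x y : L) : L := meet (res x y) (res y x).

Definition fle {A : Type} (f g : A -> L) : Prop := forall a, le (f a) (g a).
Definition rle {A B : Type} (f g : A -> B -> L) : Prop :=
  forall a b, le (f a b) (g a b).
Definition rinv {A B : Type} (phi : A -> B -> L) : B -> A -> L := fun b a => phi a b.
Definition rcomp {A B C : Type} (phi : A -> B -> L) (psi : B -> C -> L) : A -> C -> L :=
  fun a c => sup (fun x => exists b, x = mul (phi a b) (psi b c)).
Definition scomp {A B : Type} (f : A -> L) (phi : A -> B -> L) : B -> L :=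
  fun b => sup (fun x => exists a, x = mul (f a) (phi a b)).
Definition compg {A B : Type} (phi : A -> B -> L) (g : B -> L) : A -> L :=
  fun a => sup (fun x => exists b, x = mul (phi a b) (g b)).
Definition ssc {A : Type} (f g : A -> L) : L :=
  sup (fun x => exists a, x = mul (f a) (g a)).
Definition Sdeg {A : Type} (g f : A -> L) : L :=
  inf (fun x => exists a, x = res (g a) (f a)).
Definition Edeg {A : Type} (g f : A -> L) : L :=
  inf (fun x => exists a, x = biimp (g a) (f a)).
End Ops.

Record fuzzy_automaton (L : crl) (Sigma : Type) := FA {
  st : Type;
  st_inhabited : inhabited st;
  delta : st -> Sigma -> st -> L;
  sigma0 : st -> L;
  tau0 : st -> L
}.

Arguments st {L Sigma}.
Arguments delta {L Sigma}.
Arguments sigma0 {L Sigma}.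
Arguments tau0 {L Sigma}.

Section Aut.
Variables (L : crl) (Sigma : Type).

Definition delta_s (A : fuzzy_automaton L Sigma) (s : Sigma) : st A -> st A -> L :=
  fun x y => delta A x s y.

Fixpoint fwd (A : fuzzy_automaton L Sigma) (f : st A -> L) (w : list Sigma) : st A -> L :=
  match w with
  | [] => f
  | s :: w' => fwd A (scomp f (delta_s A s)) w'
  end.

Definition lang (A : fuzzy_automaton L Sigma) (w : list Sigma) : L :=
  ssc (fwd A (sigma0 A) w) (tau0 A).

Definition rnorm (A A' : fuzzy_automaton L Sigma) (phi : st A -> st A' -> L) : L :=
  Sdeg (sigma0 A) (scomp (sigma0 A') (rinv phi)).

Definition depth_bounded_bisim (A A' : fuzzy_automaton L Sigma)
    (Phi : nat -> st A -> st A' -> L) : Prop :=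
  (forall n, rle (Phi (S n)) (Phi n)) /\
  fle (compg (rinv (Phi 0)) (tau0 A)) (tau0 A') /\
  fle (compg (Phi 0) (tau0 A')) (tau0 A) /\
  (forall (s : Sigma) (n : nat),
      rle (rcomp (rinv (Phi (S n))) (delta_s A s))
          (rcomp (delta_s A' s) (rinv (Phi n)))) /\
  (forall (s : Sigma) (n : nat),
      rle (rcomp (Phi (S n)) (delta_s A' s))
          (rcomp (delta_s A s) (Phi n))).

Definition bnorm (A A' : fuzzy_automaton L Sigma)
    (Phi : nat -> st A -> st A' -> L) : L :=
  meet (inf (fun x => exists n, x = rnorm A A' (Phi n)))
       (inf (fun x => exists n, x = rnorm A' A (rinv (Phi n)))).
End Aut.

(* Main.v *)
Require Import Defs.
From Stdlib Require Import List Arith.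
Import ListNotations.

Section Lat.
Variable L : crl.
Implicit Types x y z : L.

Lemma lt_ x y z : le x y -> le y z -> le x z.
Proof. apply le_trans. Qed.
Lemma lr x : le x x.
Proof. apply le_refl. Qed.
Lemma sub (S : L -> Prop) x : S x -> le x (sup S).
Proof. apply sup_ub. Qed.
Lemma subt (S : L -> Prop) x y : S y -> le x y -> le x (sup S).
Proof. intros H1 H2; eapply lt_; [exact H2| apply sub; exact H1]. Qed.

Lemma mul_mono_l x y z : le x y -> le (mul x z) (mul y z).
Proof.
  intros H. apply adjunction. eapply lt_; [exact H|]. apply adjunction, lr.
Qed.
Lemma mul_mono_r x y z : le x y -> le (mul z x) (mul z y).
Proof. intros H. rewrite (mulC L z x), (mulC L z y). apply mul_mono_l; auto. Qed.

Lemma mul_sup_le (S : L -> Prop) z y :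
  (forall s, S s -> le (mul s z) y) -> le (mul (sup S) z) y.
Proof.
  intros H. apply adjunction. apply sup_least. intros s Hs. apply adjunction; auto.
Qed.
Lemma mul_sup_le_r (S : L -> Prop) z y :
  (forall s, S s -> le (mul z s) y) -> le (mul z (sup S)) y.
Proof.
  intros H. rewrite mulC. apply mul_sup_le. intros s Hs. rewrite mulC; auto.
Qed.

Lemma inf_lb (S : L -> Prop) y : S y -> le (inf S) y.
Proof. intros Hy. unfold inf. apply sup_least. intros x Hx. auto. Qed.
Lemma inf_glb (S : L -> Prop) x : (forall y, S y -> le x y) -> le x (inf S).
Proof. intros H. unfold inf. apply sub. exact H. Qed.
Lemma meet_l x y : le (meet x y) x.
Proof. apply inf_lb; auto. Qed.
Lemma meet_r x y : le (meet x y) y.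
Proof. apply inf_lb; auto. Qed.
Lemma meet_glb x y z : le z x -> le z y -> le z (meet x y).
Proof. intros; apply inf_glb; intros w [->| ->]; auto. Qed.
End Lat.

Section Main.
Variables (L : crl) (Sigma : Type).

Lemma step (A B : Type) (f : A -> L) (f' : B -> L) (psi chi : A -> B -> L)
  (d : A -> A -> L) (d' : B -> B -> L) (x : L)
  (H : rle (rcomp (rinv psi) d) (rcomp d' (rinv chi)))
  (Hf : forall a, le (mul x (f a)) (scomp f' (rinv psi) a)) :
  forall b, le (mul x (scomp f d b)) (scomp (scomp f' d') (rinv chi) b).
Proof.
  intros b. unfold scomp at 1. apply mul_sup_le_r. intros t [a ->].
  rewrite mulA. eapply lt_; [apply mul_mono_l, Hf|].
  unfold scomp at 1. apply mul_sup_le. intros t [a' ->].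
  rewrite <- mulA. eapply lt_.
  { apply mul_mono_r. eapply lt_; [|apply (H a' b)].
    unfold rcomp. apply sub. exists a. reflexivity. }
  unfold rcomp. apply mul_sup_le_r. intros t [c' ->].
  rewrite mulA. apply subt with (y := mul (scomp f' d' c') (rinv chi c' b)).
  { exists c'. reflexivity. }
  apply mul_mono_l. unfold scomp. apply sub. exists a'. reflexivity.
Qed.

Lemma fwd_sim (A A' : fuzzy_automaton L Sigma) (Phi : nat -> st A -> st A' -> L)
  (H4 : forall (s : Sigma) (n : nat),
      rle (rcomp (rinv (Phi (S n))) (delta_s A s))
          (rcomp (delta_s A' s) (rinv (Phi n)))) :
  forall w m f f' x,
  (forall a, le (mul x (f a)) (scomp f' (rinv (Phi (length w + m))) a)) ->
  forall a, le (mul x (fwd A f w a)) (scomp (fwd A' f' w) (rinv (Phi m)) a).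
Proof.
  induction w as [|s w IH]; intros m f f' x Hf; simpl in *; auto.
  apply IH. apply step with (psi := Phi (S (length w + m))); auto.
Qed.

Lemma half (A A' : fuzzy_automaton L Sigma) (Phi : nat -> st A -> st A' -> L)
  (H2 : fle (compg (rinv (Phi 0)) (tau0 A)) (tau0 A'))
  (H4 : forall (s : Sigma) (n : nat),
      rle (rcomp (rinv (Phi (S n))) (delta_s A s))
          (rcomp (delta_s A' s) (rinv (Phi n)))) :
  forall w, le (mul (rnorm A A' (Phi (length w))) (lang A w)) (lang A' w).
Proof.
  intros w. set (x := rnorm A A' (Phi (length w))).
  assert (Hs : forall a, le (mul x (fwd A (sigma0 A) w a))
                 (scomp (fwd A' (sigma0 A') w) (rinv (Phi 0)) a)).
  { apply fwd_sim; auto. rewrite Nat.add_0_r. intros a.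
    apply adjunction.
    unfold x, rnorm, Sdeg. apply inf_lb. exists a. reflexivity. }
  unfold lang, ssc at 1. apply mul_sup_le_r. intros t [a ->].
rewrite mulA. eapply lt_; [apply mul_mono_l, Hs|].
  unfold scomp. apply mul_sup_le. intros t [a' ->].
  rewrite <- mulA.
  apply subt with (y := mul (fwd A' (sigma0 A') w a') (tau0 A' a')).
  { exists a'. reflexivity. }
  apply mul_mono_r. eapply lt_; [|apply (H2 a')].
  unfold compg. apply sub. exists a. reflexivity.
Qed.
End Main.

Theorem mainTheorem15 (L : crl) (Sigma : Type)
  (A A' : fuzzy_automaton L Sigma) (Phi : nat -> st A -> st A' -> L) :
  depth_bounded_bisim A A' Phi ->
  le (bnorm A A' Phi) (Edeg (lang A) (lang A')).
Proof.
  intros (H1 & H2 & H3 & H4 & H5).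
  unfold Edeg. apply inf_glb. intros y [w ->]. unfold biimp.
  apply meet_glb; apply adjunction.
  - eapply lt_; [|apply (@half L Sigma A A' Phi H2 H4 w)]. apply mul_mono_l.
    unfold bnorm. eapply lt_; [apply meet_l|]. apply inf_lb. exists (length w). reflexivity.
  - eapply lt_; [|apply (@half L Sigma A' A (fun n => rinv (Phi n)) H3 H5 w)]. apply mul_mono_l.
    unfold bnorm. eapply lt_; [apply meet_r|]. apply inf_lb. exists (length w). reflexivity.
Qed.
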